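(* Let $X$ be a graph on vertex set $V$, $|V|=n$, which may have loops (no multiple edges), with vertex degrees $d_i$ (each loop counted once), and let $\tau$ be the least eigenvalue of its adjacency matrix $A$. Let $S$ be an independent set of size $s\ge1$ containing $s_1$ vertices with loops, and put $\bar d_S=\frac1s\sum_{i\in S}d_i$, $k_S=2\bar d_S-\frac1n\sum_{i\in V}d_i$. If $k_S>\tau$, then \[ s\le n\,\frac{-\tau+\sqrt{\tau^2+4s_1\frac{k_S-\tau}{n}}}{2(k_S-\tau)}. \]
   Context: The adjacency matrix has $A_{ii}=1$ if vertex $i$ carries a loop and $0$ otherwise, and $A_{ij}=1$ for adjacent distinct $i,j$. An independent set is a set of vertices no two distinct members of which are adjacent; looped vertices may belong to it. *)

(* Defs.v *)
From HB Require Import structures.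
From mathcomp Require Import all_boot all_order all_algebra.
Set Implicit Arguments. Unset Strict Implicit. Unset Printing Implicit Defensive.
Import Order.TTheory GRing.Theory Num.Theory.
Local Open Scope ring_scope.

(* A graph with possible loops on vertex set 'I_n is a symmetric relation
   e : rel 'I_n; e i i means vertex i carries a loop. *)

Definition adjmx (R : nzRingType) (n : nat) (e : rel 'I_n) : 'M[R]_n :=
  \matrix_(i, j) (e i j)%:R.

Definition deg (n : nat) (e : rel 'I_n) (i : 'I_n) : nat := #|[set j | e i j]|.

Definition independent (n : nat) (e : rel 'I_n) (S : {set 'I_n}) : Prop :=
  forall i j, i \in S -> j \in S -> i != j -> ~~ e i j.

Definition least_eigenvalue (R : realFieldType) (n : nat) (A : 'M[R]_n) (tau : R)
  : Prop := eigenvalue A tau /\ (forall a, eigenvalue A a -> tau <= a).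

(* Main.v *)
Require Import Defs.
From HB Require Import structures.
From mathcomp Require Import all_boot all_order all_algebra.
From mathcomp Require Import complex ring lra.
Import Order.TTheory GRing.Theory Num.Theory.
Local Open Scope ring_scope.

Lemma rayleigh (R : rcfType) n (A : 'M[R]_n) tau :
  A^T = A -> least_eigenvalue A tau ->
  forall x : 'rV[R]_n, tau * (x *m x^T) 0 0 <= (x *m A *m x^T) 0 0.
Proof.
move=> Asym [_ taumin] x.
pose f := real_complex R.
pose B := map_mx f A.
have Bh : B \is hermsymmx.
  apply/is_hermitianmxP; rewrite expr0 scale1r.
  apply/matrixP => i j; rewrite !mxE.
  have -> : A j i = A i j by rewrite -{1}Asym mxE.
  exact: (esym (conjc_real _)).
have /orthomx_spectralP BE := hermitian_normalmx Bh.
set P := spectralmx B in BE; set d := spectral_diag B in BE.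
have Pu : P \is unitarymx by apply: spectral_unitarymx.
have Pun : P \in unitmx by apply: spectral_unit.
have dreal : d \is a realmx by apply: hermitian_spectral_diag_real.
have dge : forall j, f tau <= d 0 j.
  move=> j.
  have /complex_realP [r dr] : d 0 j \is Num.real by move/mxOverP: dreal; apply.
  rewrite dr /f lecR; apply: taumin.
  have ev : eigenvalue B (d 0 j).
  apply/eigenvalueP; exists (row j P).
    rewrite BE !mulmxA -row_mul mulmxV // -row_mul mul1mx row_diag_mx -scalemxAl.
    by rewrite rowE.
  apply/negP => /eqP rj0.
  rewrite rowE in rj0.
  have := congr1 (mulmx^~ (invmx P)) rj0; rewrite mul0mx.
  rewrite mulmxK // => /matrixP /(_ 0 j); rewrite !mxE !eqxx /=.
  by move/eqP; rewrite oner_eq0.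
  by move: ev; rewrite dr -(eigenvalue_map (real_complex R)).
rewrite -(@lecR R).
pose xc := map_mx f x.
have fE (M : 'M[R]_1) : real_complex R (M 0 0) = (map_mx f M) 0 0 by rewrite mxE.
rewrite rmorphM /= !fE !map_mxM -map_trmx -/B -/xc.
have xct : xc^T = map_mx Num.conj xc^T.
  by apply/matrixP => i j; rewrite !mxE; exact: (esym (conjc_real _)).
pose y := xc *m invmx P.
pose z := map_mx Num.conj y^T.
have Pz : P *m xc^T = z.
  rewrite /z /y trmx_mul map_mxM invmx_unitary // trmxCK -xct //.
have Q1 : xc *m xc^T = y *m z by rewrite -Pz /y mulmxA mulmxKV.
have Q2 : xc *m B *m xc^T = y *m diag_mx d *m z.
  by rewrite -Pz BE !mulmxA.
rewrite Q1 Q2 !mxE mulr_sumr; apply: ler_sum => j _.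
rewrite mul_mx_diag /z !mxE -mulrA mulrCA [X in _ <= X]mulrCA.
rewrite mulrCA; apply: ler_wpM2r; first exact: mul_conjC_ge0.
exact: dge.
Qed.


Lemma final (R : rcfType) (nn s s1 SD D tau : R) :
  0 < nn -> 0 < s -> 0 <= s1 ->
  let u := s / nn in
  let dbar := SD / s in let k := 2 * dbar - D / nn in
  k > tau ->
  tau * (s - 2 * u * s + u ^+ 2 * nn) <= s1 - u * SD - u * SD + u ^+ 2 * D ->
  s <= nn * ((- tau + Num.sqrt (tau ^+ 2 + 4 * s1 * ((k - tau) / nn))) / (2 * (k - tau))).
Proof.
move=> hn hs hs1 u dbar k hk H.
have ha : 0 < k - tau by rewrite subr_gt0.
have hsu : s = u * nn by rewrite /u divfK // gt_eqF.
have hSD : SD = dbar * s by rewrite /dbar divfK // gt_eqF.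
have hD : D = (D / nn) * nn by rewrite divfK // gt_eqF.
have hk' : k = 2 * dbar - D / nn by [].
move: H ha; rewrite hk' hSD [in X in X -> _]hD hsu.
set w := D / nn; set m := nn^-1.
move: hs; rewrite hsu => hs H ha.
have key : u * nn * ((2 * dbar - w - tau) * u + tau) <= s1 by nra.
have hm : 0 < m by rewrite invr_gt0.
have hnm : nn * m = 1 by rewrite mulfV // gt_eqF.
have key2 : u * ((2 * dbar - w - tau) * u + tau) <= s1 * m.
  have := ler_wpM2r (ltW hm) key. by rewrite -!mulrA (mulrCA nn) hnm mulr1; rewrite mulrA.
have sq : (2 * (2 * dbar - w - tau) * u + tau) ^+ 2 <= tau ^+ 2 + 4 * s1 * ((2 * dbar - w - tau) * m) by nra.
have hq : 2 * (2 * dbar - w - tau) * u + tau <= Num.sqrt (tau ^+ 2 + 4 * s1 * ((2 * dbar - w - tau) * m)).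
  apply: le_trans (ler_norm _) _; rewrite -sqrtr_sqr ler_sqrt //.
  by apply: le_trans sq; rewrite sqr_ge0.
rewrite [u * nn]mulrC ler_pM2l // ler_pdivlMr; last by rewrite mulr_gt0.
lra.
Qed.

Lemma quadE (R : comRingType) n (M : 'M[R]_n) (x : 'rV[R]_n) :
  (x *m M *m x^T) 0 0 = \sum_i \sum_j x 0 i * M i j * x 0 j.
Proof.
rewrite mxE exchange_big /=; apply: eq_bigr => j _.
rewrite !mxE mulr_suml; apply: eq_bigr => i _.
by [].
Qed.

Lemma normE (R : comRingType) n (x : 'rV[R]_n) :
  (x *m x^T) 0 0 = \sum_i x 0 i * x 0 i.
Proof. by rewrite mxE; apply: eq_bigr => i _; rewrite mxE. Qed.

Lemma exp1 (R : comRingType) n (c : 'I_n -> R) u :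
  \sum_i (c i - u) * (c i - u) =
  \sum_i c i * c i - 2 * u * \sum_i c i + u ^+ 2 * n%:R.
Proof.
have -> : u ^+ 2 * n%:R = \sum_(i < n) u ^+ 2 by rewrite sumr_const card_ord mulr_natr.
rewrite !mulr_sumr -sumrB -big_split /=; apply: eq_bigr => i _; ring.
Qed.

Lemma exp2 (R : comRingType) n (c : 'I_n -> R) (a : 'I_n -> 'I_n -> R) u :
  \sum_i \sum_j (c i - u) * a i j * (c j - u) =
  \sum_i \sum_j c i * a i j * c j - u * \sum_i \sum_j c i * a i j
  - u * \sum_i \sum_j a i j * c j + u ^+ 2 * \sum_i \sum_j a i j.
Proof.
rewrite !mulr_sumr -!sumrB -big_split /=; apply: eq_bigr => i _.
rewrite !mulr_sumr -!sumrB -big_split /=; apply: eq_bigr => j _; ring.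
Qed.

Lemma sum_bool_card (R : pzSemiRingType) n (P : pred 'I_n) :
  \sum_i ((P i)%:R : R) = (#|[set i | P i]|)%:R.
Proof.
rewrite -sum1dep_card natr_sum [RHS]big_mkcond /=; apply: eq_bigr => i _.
by case: (P i).
Qed.

Theorem corollary3p4 (R : rcfType) (n : nat) (e : rel 'I_n)
    (tau : R) (S : {set 'I_n}) :
  symmetric e ->
  least_eigenvalue (adjmx R e) tau ->
  independent e S ->
  (1 <= #|S|)%N ->
  let s : R := (#|S|)%:R in
  let s1 : R := (#|[set i in S | e i i]|)%:R in
  let dbar : R := (\sum_(i in S) (deg e i)%:R) / s in
  let k : R := 2 * dbar - (\sum_(i : 'I_n) (deg e i)%:R) / n%:R in
  k > tau ->
  s <= n%:R * ((- tau + Num.sqrt (tau ^+ 2 + 4 * s1 * ((k - tau) / n%:R)))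
               / (2 * (k - tau))).
Proof.
move=> esym lev ind hS s s1 dbar k hk.
have hSn : (#|S| <= n)%N by rewrite -[n in (_ <= n)%N]card_ord max_card.
have hn : (0 : R) < n%:R by rewrite ltr0n; apply: leq_trans hSn.
have hs : (0 : R) < s by rewrite /s ltr0n.
have hs1 : (0 : R) <= s1 by rewrite /s1 ler0n.
have F := @final R n%:R s s1 (\sum_(i in S) (deg e i)%:R) (\sum_i (deg e i)%:R) tau hn hs hs1 hk.
apply: F.
pose c i : R := (i \in S)%:R.
pose a i j : R := (e i j)%:R.
pose u := s / n%:R.
pose x := \row_i (c i - u).
have Asym : (adjmx R e)^T = adjmx R e.
  by apply/matrixP => i j; rewrite !mxE esym.
have := @rayleigh _ _ _ _ Asym lev x.
rewrite quadE normE.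
under eq_bigr do rewrite mxE.
under [X in _ <= X]eq_bigr do under eq_bigr do rewrite !mxE.
rewrite exp1 (exp2 _ _ c a).
have dE i : \sum_j a i j = (deg e i)%:R.
  by rewrite /a (sum_bool_card _ _ (fun j => e i j)).
have Sc : \sum_i c i = s.
  by rewrite /c (sum_bool_card _ _ (fun i => i \in S)) /s; congr (_%:R); apply: eq_card => i; rewrite inE.
have Sc2 : \sum_i c i * c i = s.
  by rewrite -Sc; apply: eq_bigr => i _; rewrite /c; case: (i \in S); rewrite ?mulr1 ?mulr0.
have SA : \sum_i \sum_j c i * a i j * c j = s1.
  rewrite /s1 -(sum_bool_card _ _ (fun i => (i \in S) && e i i)).
  apply: eq_bigr => i _; rewrite (bigD1 i) //= big1 ?addr0.
    by rewrite /c /a; case: (i \in S); case: (e i i); rewrite /= ?mulr1 ?mulr0 ?mul0r.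
  move=> j ji; rewrite /c /a.
  case iS: (i \in S); last by rewrite !mul0r.
  case jS: (j \in S); last by rewrite mulr0.
  by rewrite (negbTE (ind i j iS jS _)) ?mulr0 ?mul0r // eq_sym.
have SB : \sum_i \sum_j c i * a i j = \sum_(i in S) (deg e i)%:R.
  rewrite [RHS]big_mkcond /=; apply: eq_bigr => i _.
  by rewrite -mulr_sumr dE /c; case: (i \in S); rewrite ?mul1r ?mul0r.
have SC : \sum_i \sum_j a i j * c j = \sum_(i in S) (deg e i)%:R.
  rewrite exchange_big /= -SB; apply: eq_bigr => j _; rewrite -mulr_suml -mulr_sumr.
  rewrite mulrC; congr (_ * _); apply: eq_bigr => i _; by rewrite /a esym.
have SD : \sum_i \sum_j a i j = \sum_i (deg e i)%:R.
  by apply: eq_bigr => i _; rewrite dE.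
by rewrite Sc Sc2 SA SB SC SD.
Qed.
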